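(* Let $G\le\operatorname{Homeo}(\mathfrak{C})$ be vigorous and approximately full. Let $C\in K_{\mathfrak{C}}$ and let $\Gamma\subseteq G$ be finite such that for $\gamma_1,\gamma_2\in\Gamma$, $C\gamma_1\cap C\gamma_2\neq\varnothing$ implies $\gamma_1=\gamma_2$. Let $g$ be a permutation of $\Gamma$, and let $\delta\in\operatorname{Homeo}(\mathfrak{C})$ be such that $\operatorname{supp}(\delta)\subseteq\bigcup_{\gamma\in\Gamma}C\gamma$ and, for each $\gamma\in\Gamma$, $\delta$ agrees with $\gamma^{-1}(\gamma g)$ on $C\gamma$ (i.e. $p\delta=(p\gamma^{-1})(\gamma g)$ for $p\in C\gamma$). If $O_G(C)$ is an even element of $(\mathcal{O}(G),+)$ or $g$ is an even permutation, then $\delta\in G$.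
   Context: $\mathfrak{C}$ denotes a Cantor space (a space homeomorphic to $\{0,1\}^\omega$). Groups of homeomorphisms act on the right, products composed left to right. $K_{\mathfrak{C}}$ denotes the set of non-empty proper clopen subsets of $\mathfrak{C}$. For $\gamma\in\operatorname{Homeo}(\mathfrak{C})$, $\operatorname{supp}(\gamma)=\{p\in\mathfrak{C}: p\gamma\neq p\}$. A subset $S\subseteq \operatorname{Homeo}(\mathfrak{C})$ is vigorous if for all clopen $A,B,C\subseteq\mathfrak{C}$ with $B,C$ non-empty proper subsets of $A$ there is $\gamma\in S$ with $\operatorname{supp}(\gamma)\subseteq A$ and $B\gamma\subseteq C$. $G$ is approximately full if whenever $\Gamma\subseteq G$ is finite, $\{D_\gamma\}_{\gamma\in\Gamma}$ is a partition of $\mathfrak{C}$ into clopen sets such that $\{D_\gamma\gamma\}_{\gamma\in\Gamma}$ is also a partition of $\mathfrak{C}$, and $\delta\in\Gamma$, there exists $\chi\in G$ with $\chi|_{D_\gamma}=\gamma|_{D_\gamma}$ for every $\gamma\in\Gamma\setminus\{\delta\}$. For $B\in K_{\mathfrak{C}}$, $O_G(B):=\{B\gamma:\gamma\in G\}$, and $\mathcal{O}(G):=\{O_G(B): B\in K_{\mathfrak{C}}\}$; it is an abelian group under $O_G(U)+O_G(V):=O_G(U\mu\cup V\nu)$, where $\mu,\nu\in G$ are any elements with $U\mu\cap V\nu=\varnothing$ and $U\mu\cup V\nu\neq\mathfrak{C}$. An element $x\in\mathcal{O}(G)$ is even if $x=y+y$ for some $y\in\mathcal{O}(G)$. *)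

(* Defs.v *)
From HB Require Import structures.
From mathcomp Require Import all_boot all_order all_algebra.
From mathcomp Require Import fingroup perm.
From mathcomp Require Import all_classical all_reals all_analysis.
Set Implicit Arguments. Unset Strict Implicit. Unset Printing Implicit Defensive.
Local Open Scope classical_set_scope.

(* Homeomorphisms act on the right:
   p gamma is written (gamma p), B gamma is (gamma @` B), and the product
   gamma1 gamma2 (first gamma1, then gamma2) is (gamma2 \o gamma1). *)
Notation CS := cantor_space.

Definition homeo (f : CS -> CS) : Prop :=
  exists g : CS -> CS, cancel f g /\ cancel g f /\ continuous f /\ continuous g.

Definition supp (f : CS -> CS) : set CS := [set p | f p <> p].

Definition KC (A : set CS) : Prop := clopen A /\ A !=set0 /\ A <> setT.

Definition homeo_subgroup (G : set (CS -> CS)) : Prop :=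
  (forall f, G f -> homeo f) /\ G id /\
  (forall f g, G f -> G g -> G (g \o f)) /\
  (forall f, G f -> exists2 g, G g & cancel f g /\ cancel g f).

Definition vigorous (S : set (CS -> CS)) : Prop :=
  forall A B C : set CS, clopen A -> clopen B -> clopen C ->
    B !=set0 -> B `<=` A -> B <> A ->
    C !=set0 -> C `<=` A -> C <> A ->
    exists2 g, S g & supp g `<=` A /\ g @` B `<=` C.

(* A finite subset Gamma of G is given as an injective enumeration
   gam : 'I_n -> (CS -> CS); D i is the block D_{gam i}. *)
Definition approximately_full (G : set (CS -> CS)) : Prop :=
  forall (n : nat) (gam : 'I_n -> (CS -> CS)) (D : 'I_n -> set CS) (d : 'I_n),
    injective gam -> (forall i, G (gam i)) ->
    (forall i, clopen (D i) /\ D i !=set0) ->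
    (forall i j, i <> j -> D i `&` D j = set0) ->
    \bigcup_i D i = setT ->
    (forall i j, i <> j -> gam i @` D i `&` gam j @` D j = set0) ->
    \bigcup_i (gam i @` D i) = setT ->
    exists2 chi, G chi & forall i, i <> d -> forall p, D i p -> chi p = gam i p.

Definition orbitG (G : set (CS -> CS)) (B : set CS) : set (set CS) :=
  [set g @` B | g in G].

Definition orbit_sum (G : set (CS -> CS)) (x y z : set (set CS)) : Prop :=
  exists U V (mu nu : CS -> CS),
    [/\ KC U, KC V, G mu & G nu] /\
    [/\ x = orbitG G U, y = orbitG G V,
        mu @` U `&` nu @` V = set0, mu @` U `|` nu @` V <> setT &
        z = orbitG G (mu @` U `|` nu @` V)].

Definition orbit_even (G : set (CS -> CS)) (x : set (set CS)) : Prop :=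
  exists2 B, KC B & orbit_sum G (orbitG G B) (orbitG G B) x.

(* Main.v *)
Set Warnings "-notation-overridden,-ambiguous-paths,-notation-incompatible-prefix,-deprecated".
Require Import Defs.
From HB Require Import structures.
From mathcomp Require Import all_boot all_order all_algebra.
From mathcomp Require Import fingroup perm.
From mathcomp Require Import all_classical all_reals all_analysis.
Local Open Scope classical_set_scope.
Lemma homeo_clopen (f : CS -> CS) (A : set CS) : homeo f -> clopen A -> clopen (f @` A).
Proof.
case=> g [fg [gf [cf cg]]] [oA cA].
have -> : f @` A = g @^-1` A.
  apply/seteqP; split => x.
  - by case=> a Aa <-; rewrite /preimage /= fg.
  - by move=> Agx; exists (g x) => //; exact: gf.
split.
- by apply: open_comp => // y _; exact: cg.
- exact: (proj1 (continuous_closedP _) cg).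
Qed.

Lemma clopen_split (W : set CS) : clopen W -> W !=set0 ->
  exists W1 W2, [/\ clopen W1, clopen W2, W1 !=set0 & W2 !=set0] /\
     (W1 `&` W2 = set0 /\ W1 `|` W2 = W).
Proof.
move=> [oW cW] [p Wp].
have lp : limit_point [set: CS] p by rewrite (proj2 cantor_perfect).
have [y [yp _ Wy]] : exists y, [/\ y != p, [set: CS] y & W y].
  apply: lp; apply: open_nbhs_nbhs; by split.
have py : p != y by rewrite eq_sym.
have [U [cU Up nUy]] := cantor_zero_dimensional py.
exists (W `&` U), (W `&` ~` U); split; first split.
- by apply: clopenI.
- by apply: clopenI => //; apply: clopenC.
- by exists p.
- by exists y.
split.
- by apply/seteqP; split => x // [[_ ?] [_ ?]].
- by rewrite -setIUr setUCr setIT.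
Qed.
Lemma disjP {A B : set CS} {x : CS} : A `&` B = set0 -> A x -> B x -> False.
Proof. by move=> H Ax Bx; have : (A `&` B) x by []; rewrite H. Qed.

Definition sel4 {T} (a b c d : T) (i : 'I_4) : T :=
  match val i with 0 => a | 1 => b | 2 => c | _ => d end.

Lemma AF4 G : approximately_full G -> forall (m1 m2 m3 m4 : CS -> CS) (P1 P2 P3 P4 : set CS),
 G m1 -> G m2 -> G m3 -> G m4 ->
 clopen P1 -> clopen P2 -> clopen P3 -> clopen P4 ->
 P1 !=set0 -> P2 !=set0 -> P3 !=set0 -> P4 !=set0 ->
 m1 <> m2 -> m1 <> m3 -> m1 <> m4 -> m2 <> m3 -> m2 <> m4 -> m3 <> m4 ->
 P1 `&` P2 = set0 -> P1 `&` P3 = set0 -> P1 `&` P4 = set0 ->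
 P2 `&` P3 = set0 -> P2 `&` P4 = set0 -> P3 `&` P4 = set0 ->
 P1 `|` P2 `|` P3 `|` P4 = setT ->
 m1@`P1 `&` m2@`P2 = set0 -> m1@`P1 `&` m3@`P3 = set0 -> m1@`P1 `&` m4@`P4 = set0 ->
 m2@`P2 `&` m3@`P3 = set0 -> m2@`P2 `&` m4@`P4 = set0 -> m3@`P3 `&` m4@`P4 = set0 ->
 m1@`P1 `|` m2@`P2 `|` m3@`P3 `|` m4@`P4 = setT ->
 exists2 chi, G chi & [/\ forall x, P1 x -> chi x = m1 x,
    forall x, P2 x -> chi x = m2 x & forall x, P4 x -> chi x = m4 x].
Proof.
move=> HAF m1 m2 m3 m4 P1 P2 P3 P4 G1 G2 G3 G4 c1 c2 c3 c4 n1 n2 n3 n4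
  d12 d13 d14 d23 d24 d34 e12 e13 e14 e23 e24 e34 cov f12 f13 f14 f23 f24 f34 fcov.
have sym (A B : set CS) : A `&` B = set0 -> B `&` A = set0 by rewrite setIC.
have nsym (a b : CS -> CS) : a <> b -> b <> a by move=> H E; apply: H.
have [|||||||chi Gchi Hchi] := HAF 4 (sel4 m1 m2 m3 m4) (sel4 P1 P2 P3 P4) (@Ordinal 4 2 isT).
- move=> [[|[|[|[|i]]]] Hi] [[|[|[|[|j]]]] Hj] //= E; try (by apply: val_inj);
  try (by exfalso; move: E; apply: nsym); try (by exfalso; move: E);
  by [].
- by move=> [[|[|[|[|i]]]] Hi].
- by move=> [[|[|[|[|i]]]] Hi].
- move=> [[|[|[|[|i]]]] Hi] [[|[|[|[|j]]]] Hj] //= E; rewrite /sel4 /=;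
  try (by exfalso; apply: E; apply: val_inj); try (by apply: sym); by [].
- apply/seteqP; split => // x _.
  have : (P1 `|` P2 `|` P3 `|` P4) x by rewrite cov.
  case => [[[?|?]|?]|?]; [exists (@Ordinal 4 0 isT)|exists (@Ordinal 4 1 isT)|
     exists (@Ordinal 4 2 isT)|exists (@Ordinal 4 3 isT)] => //.
- move=> [[|[|[|[|i]]]] Hi] [[|[|[|[|j]]]] Hj] //= E; rewrite /sel4 /=;
  try (by exfalso; apply: E; apply: val_inj); try (by apply: sym); by [].
- apply/seteqP; split => // x _.
  have : (m1@`P1 `|` m2@`P2 `|` m3@`P3 `|` m4@`P4) x by rewrite fcov.
  case => [[[?|?]|?]|?]; [exists (@Ordinal 4 0 isT)|exists (@Ordinal 4 1 isT)|
     exists (@Ordinal 4 2 isT)|exists (@Ordinal 4 3 isT)] => //.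
- exists chi => //; split => x Px.
  + by apply: (Hchi (@Ordinal 4 0 isT)).
  + by apply: (Hchi (@Ordinal 4 1 isT)).
  + by apply: (Hchi (@Ordinal 4 3 isT)).
Qed.
Definition fixes_out (f : CS -> CS) (S : set CS) :=
  (forall x, ~ S x -> f x = x) /\ (forall x, S x -> S (f x)).

Lemma fo_comm (f g : CS -> CS) (S S' : set CS) : fixes_out f S -> fixes_out g S' -> S `&` S' = set0 ->
  forall x, f (g x) = g (f x).
Proof.
move=> [f1 f2] [g1 g2] d x.
have [Sx|nSx] := pselect (S x).
- have nS'x : ~ S' x by move=> H; exact: (disjP d Sx H).
  rewrite (g1 _ nS'x) g1 //; move=> H; exact: (disjP d (f2 _ Sx) H).
- rewrite (f1 _ nSx).
  have [S'x|nS'x] := pselect (S' x).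
  + rewrite f1 //; move=> H; exact: (disjP d H (g2 _ S'x)).
  + by rewrite g1 // f1.
Qed.

Lemma fo_image (u u' : CS -> CS) (W : set CS) : cancel u u' -> cancel u' u -> (forall x, ~ W x -> u x = x) ->
  u @` W = W.
Proof.
move=> uu' u'u fx; apply/seteqP; split => x.
- case=> y Wy <-; apply: contrapT => nW.
  have := fx _ nW => /(can_inj uu') E; by apply: nW; rewrite E.
- move=> Wx; exists (u' x) => //; apply: contrapT => nW.
  have := fx _ nW; rewrite u'u => E; by apply: nW; rewrite -E.
Qed.

Lemma fo_of (u u' : CS -> CS) (W : set CS) : cancel u u' -> cancel u' u -> (forall x, ~ W x -> u x = x) ->
  fixes_out u W.
Proof.
move=> uu' u'u fx; split => // x Wx.
by rewrite -(@fo_image u u' W uu' u'u fx); exists x.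
Qed.

Lemma nontriv (G : set (CS -> CS)) (W : set CS) : vigorous G -> clopen W -> W !=set0 ->
  exists2 u, G u & (forall x, ~ W x -> u x = x) /\ u <> id.
Proof.
move=> HV cW nW.
have [W1 [W2 [[c1 c2 [x1 W1x] [x2 W2x]] [d12 U12]]]] := @clopen_split W cW nW.
have [||||||u Gu [su im]] := HV W W1 W2 cW c1 c2.
- by exists x1.
- by rewrite -U12; apply: subsetUl.
- move=> E; apply: (disjP d12 _ W2x); rewrite E -U12; by right.
- by exists x2.
- by rewrite -U12; apply: subsetUr.
- move=> E; apply: (disjP d12 W1x); rewrite E -U12; by left.
exists u => //; split.
- move=> x nWx; apply: contrapT => ne; apply: nWx; exact: su.
- move=> E; have : W2 (u x1) by apply: im; exists x1.
  rewrite E => W2x1; exact: (disjP d12 W1x W2x1).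
Qed.

Definition Tr (D : set CS) (p p' q q' : CS -> CS) (x : CS) : CS :=
  if pselect ((p @` D) x) then q (p' x)
  else if pselect ((q @` D) x) then p (q' x) else x.

Section TrSec.
Variables (DD : set CS) (p p' q q' : CS -> CS).
Hypotheses (pp : cancel p p') (qq : cancel q q') (dis : p @` DD `&` q @` DD = set0).

Lemma Tr1 x : (p @` DD) x -> Tr DD p p' q q' x = q (p' x).
Proof. by move=> px; rewrite /Tr; destruct (pselect ((p @` DD) x)). Qed.
Lemma Tr2 x : (q @` DD) x -> Tr DD p p' q q' x = p (q' x).
Proof.
move=> qx; rewrite /Tr; destruct (pselect ((p @` DD) x)) as [px|npx].
  by exfalso; exact: (disjP dis px qx).
by destruct (pselect ((q @` DD) x)).
Qed.
Lemma Tr3 x : ~ (p @` DD) x -> ~ (q @` DD) x -> Tr DD p p' q q' x = x.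
Proof.
by move=> np nq; rewrite /Tr; destruct (pselect ((p @` DD) x)) => //;
  destruct (pselect ((q @` DD) x)).
Qed.

Lemma Tr_fo : fixes_out (Tr DD p p' q q') (p @` DD `|` q @` DD).
Proof.
split.
- by move=> x nx; rewrite Tr3 // => ?; apply: nx; [left|right].
- move=> x [[d Dd <-]|[d Dd <-]].
  + by rewrite Tr1 ?pp; [right; exists d|exists d].
  + by rewrite Tr2 ?qq; [left; exists d|exists d].
Qed.

Lemma TrK x : Tr DD p p' q q' (Tr DD p p' q q' x) = x.
Proof.
have [[d Dd <-]|px] := pselect ((p @` DD) x).
  rewrite (@Tr1 (p d)); last by exists d.
  rewrite pp (@Tr2 (q d)) ?qq //; by exists d.
have [[d Dd <-]|qx] := pselect ((q @` DD) x).
  rewrite (@Tr2 (q d)); last by exists d.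
  rewrite qq (@Tr1 (p d)) ?pp //; by exists d.
by rewrite !Tr3.
Qed.
End TrSec.
Lemma img_trans (D : set CS) (p p' q : CS -> CS) : cancel p p' ->
  (q \o p') @` (p @` D) = q @` D.
Proof.
move=> pp; apply/seteqP; split => y.
- by case=> _ [d Dd <-] <-; exists d => //=; rewrite pp.
- by case=> d Dd <-; exists (p d); [exists d|rewrite /= pp].
Qed.

Lemma img_id (A : set CS) : id @` A = A.
Proof. by apply/seteqP; split => y; [case=> x Ax <-|exists y]. Qed.

Lemma img_fix (A : set CS) (f : CS -> CS) : (forall x, A x -> f x = x) -> f @` A = A.
Proof.
move=> H; apply/seteqP; split => y; first by case=> x Ax <-; rewrite H.
by move=> Ay; exists y => //; rewrite H.
Qed.

Lemma NT (G : set (CS -> CS)) : homeo_subgroup G -> vigorous G -> approximately_full G ->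
 forall (D : set CS) (p p' q q' : CS -> CS) (W : set CS),
 G p -> G q -> G p' -> G q' ->
 cancel p p' -> cancel p' p -> cancel q q' -> cancel q' q ->
 clopen D -> D !=set0 -> p@`D `&` q@`D = set0 ->
 clopen W -> W !=set0 -> p@`D `&` W = set0 -> q@`D `&` W = set0 ->
 (~` (p@`D `|` q@`D `|` W)) !=set0 ->
 exists2 chi, G chi & (forall x, ~ W x -> chi x = Tr D p p' q q' x).
Proof.
move=> [Gh [Gid [Gcomp Ginv]]] HV HAF D p p' q q' W Gp Gq Gp' Gq' pp p'p qq q'q
  cD [d0 Dd0] dpq cW nW dpW dqW nR.
have [u Gu [fu nu]] := @nontriv G W HV cW nW.
have [u' Gu' [uu' u'u]] := Ginv u Gu.
have cpD : clopen (p @` D) by apply: homeo_clopen => //; apply: Gh.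
have cqD : clopen (q @` D) by apply: homeo_clopen => //; apply: Gh.
set R := ~` (p@`D `|` q@`D `|` W).
pose v := if pselect (q \o p' = p \o q') then u else id.
have Gv : G v by rewrite /v; case: pselect.
have fv : forall x, ~ W x -> v x = x by rewrite /v; case: pselect => // _ x /fu.
have pDW x : (p @` D) x -> ~ W x by move=> a b; exact: (disjP dpW a b).
have qDW x : (q @` D) x -> ~ W x by move=> a b; exact: (disjP dqW a b).
have im1 : (q \o p') @` (p @` D) = q @` D by apply: img_trans.
have im2 : (p \o q' \o v) @` (q @` D) = p @` D.
  rewrite -(img_trans D q q' p qq); apply/seteqP; split => y.
  - by case=> x qx <-; exists x => //=; rewrite fv //; apply: qDW.
  - by case=> x qx <-; exists x => //=; rewrite fv //; apply: qDW.
have im3 : u @` W = W by apply: (@fo_image u u' W uu' u'u fu).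
have im4 : id @` R = R by apply: img_id.
have pq0 x : (p @` D) x -> (q @` D) x -> False by move=> a b; exact: (disjP dpq a b).
have [||||||||||||||||||||||||||||||||chi Gchi [h1 h2 h4]] := @AF4 G HAF (q \o p') (p \o q' \o v) u
   id (p @` D) (q @` D) W R.
- exact: Gcomp.
- apply: (Gcomp _ _ Gv); exact: (Gcomp _ _ Gq' Gp).
- exact: Gu.
- exact: Gid.
- exact: cpD.
- exact: cqD.
- exact: cW.
- apply: (@clopenC _ _ set0); apply: clopenU => //; exact: clopenU.
- by exists (p d0); exists d0.
- by exists (q d0); exists d0.
- exact: nW.
- exact: nR.
- rewrite /v; case: pselect => [E|nE] E2.
  + apply: nu; apply/funext => x; move: E2; rewrite /= E => E2.
    have := congr1 (fun f => q (p' (f x))) E2; rewrite /= !pp !q'q => H; by rewrite -H.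
  + by exact: (nE E2).
- move=> E; have := congr1 (fun f => f (p d0)) E; rewrite /= pp fu => [e|].
    by apply: (pq0 (p d0)); [exists d0|rewrite -e; exists d0].
  by apply: pDW; exists d0.
- move=> E; have := congr1 (fun f => f (p d0)) E; rewrite /= pp => e.
  by apply: (pq0 (p d0)); [exists d0|rewrite -e; exists d0].
- move=> E; have := congr1 (fun f => f (q d0)) E; rewrite /= fv ?qq ?fu => [e||].
  + by apply: (pq0 (p d0)); [exists d0|rewrite e; exists d0].
  + by apply: qDW; exists d0.
  + by apply: qDW; exists d0.
- move=> E; have := congr1 (fun f => f (q d0)) E; rewrite /= fv ?qq => [e|].
  + by apply: (pq0 (p d0)); [exists d0|rewrite e; exists d0].
  + by apply: qDW; exists d0.
- by move=> E; apply: nu; rewrite E.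
- exact: dpq.
- exact: dpW.
- by apply/seteqP; split => x // [? H]; apply: H; left; left.
- exact: dqW.
- by apply/seteqP; split => x // [? H]; apply: H; left; right.
- by apply/seteqP; split => x // [? H]; apply: H; right.
- by rewrite /R setUC setvU.
- by rewrite im1 im2 setIC.
- by rewrite im1 im3.
- by rewrite im1 im4; apply/seteqP; split => x // [? H]; apply: H; left; right.
- by rewrite im2 im3.
- by rewrite im2 im4; apply/seteqP; split => x // [? H]; apply: H; left; left.
- by rewrite im3 im4; apply/seteqP; split => x // [? H]; apply: H; right.
- by rewrite im1 im2 im3 im4 (setUC (q @` D)) /R setUC setvU.
exists chi => // x nWx.
have [px|npx] := pselect ((p @` D) x).
  by rewrite h1 // Tr1.
have [qx|nqx] := pselect ((q @` D) x).
  by rewrite h2 //= fv // Tr2.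
rewrite h4 ?Tr3 //.
by move=> [[?|?]|?].
Qed.
Lemma decomp (T chi chi' : CS -> CS) (W : set CS) :
  (forall z, W z -> T z = z) -> (forall z, T (T z) = z) ->
  cancel chi chi' -> cancel chi' chi -> (forall x, ~ W x -> chi x = T x) ->
  exists e e', [/\ (forall y, chi y = T (e y)), (forall y, chi' y = e' (T y)),
     fixes_out e W, fixes_out e' W & (forall y, e (e' y) = y)].
Proof.
move=> TW TT cc c'c cT.
have TWi z : W (T z) -> W z by move=> H; rewrite -(TT z) TW.
exists (fun y => T (chi y)), (fun y => chi' (T y)); split.
- by move=> y; rewrite TT.
- by move=> y; rewrite TT.
- split.
  + by move=> x nx; rewrite cT // TT.
  + move=> x Wx.
    have Wc : W (chi x).
      apply: contrapT => nW.
      have nT : ~ W (T (chi x)) by move=> /TWi.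
      have E : T (chi x) = x by apply: (can_inj cc); rewrite cT // TT.
      by apply: nT; rewrite E.
    by rewrite TW.
- split.
  + by move=> x nx; apply: (can_inj cc); rewrite c'c cT.
  + move=> x Wx; rewrite TW //; apply: contrapT => nW.
    have := cT _ nW; rewrite c'c => E; apply: nW; apply: TWi; by rewrite -E.
- by move=> y; rewrite c'c TT.
Qed.
Lemma Cprime (G : set (CS -> CS)) : homeo_subgroup G -> vigorous G -> approximately_full G ->
 forall (D : set CS) (p p' q q' r r' : CS -> CS) (W1 W2 : set CS),
 G p -> G q -> G r -> G p' -> G q' -> G r' ->
 cancel p p' -> cancel p' p -> cancel q q' -> cancel q' q -> cancel r r' -> cancel r' r ->
 clopen D -> D !=set0 ->
 p@`D `&` q@`D = set0 -> p@`D `&` r@`D = set0 -> q@`D `&` r@`D = set0 ->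
 clopen W1 -> W1 !=set0 -> clopen W2 -> W2 !=set0 -> W1 `&` W2 = set0 ->
 p@`D `&` W1 = set0 -> q@`D `&` W1 = set0 -> r@`D `&` W1 = set0 ->
 p@`D `&` W2 = set0 -> q@`D `&` W2 = set0 -> r@`D `&` W2 = set0 ->
 G (fun x => Tr D p p' q q' (Tr D p p' r r' (Tr D p p' q q' (Tr D p p' r r' x)))).
Proof.
move=> HG HV HAF D p p' q q' r r' W1 W2 Gp Gq Gr Gp' Gq' Gr' pp p'p qq q'q rr r'r
  cD nD dpq dpr dqr cW1 nW1 cW2 nW2 d12 dp1 dq1 dr1 dp2 dq2 dr2.
have HG' := HG; case: HG' => [Gh [Gid [Gcomp Ginv]]].
have [d0 Dd0] := nD.
have R1 : ~` (p@`D `|` q@`D `|` W1) !=set0.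
  exists (r d0) => [[[H|H]|H]].
  - by apply: (disjP dpr H); exists d0.
  - by apply: (disjP dqr H); exists d0.
  - by apply: (disjP dr1 _ H); exists d0.
have R2 : ~` (p@`D `|` r@`D `|` W2) !=set0.
  exists (q d0) => [[[H|H]|H]].
  - by apply: (disjP dpq H); exists d0.
  - by apply: (disjP dqr _ H); exists d0.
  - by apply: (disjP dq2 _ H); exists d0.
have [chi1 Gc1 c1T] := @NT G HG HV HAF D p p' q q' W1 Gp Gq Gp' Gq' pp p'p qq q'q cD nD
  dpq cW1 nW1 dp1 dq1 R1.
have [chi2 Gc2 c2T] := @NT G HG HV HAF D p p' r r' W2 Gp Gr Gp' Gr' pp p'p rr r'r cD nD
  dpr cW2 nW2 dp2 dr2 R2.
have [chi1' Gc1' [c11 c11']] := Ginv _ Gc1.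
have [chi2' Gc2' [c22 c22']] := Ginv _ Gc2.
set T1 := Tr D p p' q q'; set T2 := Tr D p p' r r'.
have T1W z : W1 z -> T1 z = z.
  move=> Wz; rewrite /T1 Tr3 // => H.
  - exact: (disjP dp1 H Wz).
  - exact: (disjP dq1 H Wz).
have T2W z : W2 z -> T2 z = z.
  move=> Wz; rewrite /T2 Tr3 // => H.
  - exact: (disjP dp2 H Wz).
  - exact: (disjP dr2 H Wz).
have T1K z : T1 (T1 z) = z by apply: TrK.
have T2K z : T2 (T2 z) = z by apply: TrK.
have [e1 [e1' [c1E c1'E fe1 fe1' e1K]]] := @decomp T1 chi1 chi1' W1 T1W T1K c11 c11' c1T.
have [e2 [e2' [c2E c2'E fe2 fe2' e2K]]] := @decomp T2 chi2 chi2' W2 T2W T2K c22 c22' c2T.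
have fT1 : fixes_out T1 (p@`D `|` q@`D) by apply: Tr_fo.
have fT2 : fixes_out T2 (p@`D `|` r@`D) by apply: Tr_fo.
have dd1 : W1 `&` (p@`D `|` r@`D) = set0 by rewrite setIUr setIC dp1 setIC dr1 setU0.
have dd2 : W2 `&` (p@`D `|` q@`D) = set0 by rewrite setIUr setIC dp2 setIC dq2 setU0.
have ce1T2 := @fo_comm _ _ _ _ fe1 fT2 dd1.
have ce1e2 := @fo_comm _ _ _ _ fe1 fe2 d12.
have ce2T1 := @fo_comm _ _ _ _ fe2 fT1 dd2.
have -> : (fun x => T1 (T2 (T1 (T2 x)))) = chi1 \o chi2 \o chi1' \o chi2'.
  apply/funext => x /=.
  by rewrite c1E c2E c1'E c2'E ce1T2 ce1e2 e1K ce2T1 e2K.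
exact: (Gcomp _ _ Gc2' (Gcomp _ _ Gc1' (Gcomp _ _ Gc2 Gc1))).
Qed.
Lemma disj_sub {A A' B B' : set CS} : A `<=` A' -> B `<=` B' -> A' `&` B' = set0 ->
  A `&` B = set0.
Proof.
move=> sA sB d; apply/seteqP; split => x // [Ax Bx].
exact: (disjP d (sA _ Ax) (sB _ Bx)).
Qed.

Lemma inj_disj {f : CS -> CS} {A B : set CS} : injective f -> A `&` B = set0 ->
  f @` A `&` f @` B = set0.
Proof.
move=> fi d; apply/seteqP; split => x // [[a Aa <-] [b Bb]] /fi E.
by apply: (disjP d Aa); rewrite -E.
Qed.

Lemma Tr_split (B B1 B2 : set CS) (p p' q q' : CS -> CS) :
  cancel p p' -> cancel q q' -> p @` B `&` q @` B = set0 ->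
  B1 `&` B2 = set0 -> B1 `|` B2 = B ->
  forall x, Tr B p p' q q' x = Tr B1 p p' q q' (Tr B2 p p' q q' x).
Proof.
move=> pp qq d d12 U x.
have s1 : B1 `<=` B by rewrite -U; apply: subsetUl.
have s2 : B2 `<=` B by rewrite -U; apply: subsetUr.
have dd1 : p @` B1 `&` q @` B1 = set0 by apply: (disj_sub (image_subset _ s1) (image_subset _ s1)).
have dd2 : p @` B2 `&` q @` B2 = set0 by apply: (disj_sub (image_subset _ s2) (image_subset _ s2)).
have pi : injective p := can_inj pp.
have qi : injective q := can_inj qq.
have p12 := inj_disj pi d12.
have q12 := inj_disj qi d12.
have pq12 : p @` B1 `&` q @` B2 = set0 by apply: (disj_sub (image_subset _ s1) (image_subset _ s2)).
have qp12 : q @` B1 `&` p @` B2 = set0.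
  by rewrite setIC; apply: (disj_sub (image_subset _ s2) (image_subset _ s1)).
have pB1 b : B1 b -> (p @` B) (p b) by move=> ?; exists b => //; exact: s1.
have pB2 b : B2 b -> (p @` B) (p b) by move=> ?; exists b => //; exact: s2.
have qB1 b : B1 b -> (q @` B) (q b) by move=> ?; exists b => //; exact: s1.
have qB2 b : B2 b -> (q @` B) (q b) by move=> ?; exists b => //; exact: s2.
have [[b Bb <-]|npx] := pselect ((p @` B) x).
  rewrite -U in Bb; case: Bb => Bb.
  - have h1 : ~ (p @` B2) (p b) by move=> H; apply: (disjP p12 _ H); exists b.
    have h2 : ~ (q @` B2) (p b) by move=> H; apply: (disjP pq12 _ H); exists b.
    rewrite (@Tr3 B2 p p' q q' (p b) h1 h2).
    rewrite (@Tr1 B p p' q q' (p b)); last exact: pB1.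
    by rewrite (@Tr1 B1 p p' q q' (p b)) //; exists b.
  - rewrite (@Tr1 B2 p p' q q' (p b)); last by exists b.
    have h1 : ~ (p @` B1) (q b) by move=> H; exact: (disjP d (image_subset _ s1 _ H) (qB2 b Bb)).
    have h2 : ~ (q @` B1) (q b) by move=> H; apply: (disjP q12 H); exists b.
    rewrite pp (@Tr3 B1 p p' q q' (q b) h1 h2).
    by rewrite (@Tr1 B p p' q q' (p b)) ?pp //; exact: pB2.
have [[b Bb <-]|nqx] := pselect ((q @` B) x).
  rewrite -U in Bb; case: Bb => Bb.
  - have h1 : ~ (p @` B2) (q b) by move=> H; apply: (disjP qp12 _ H); exists b.
    have h2 : ~ (q @` B2) (q b) by move=> H; apply: (disjP q12 _ H); exists b.
    rewrite (@Tr3 B2 p p' q q' (q b) h1 h2).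
    rewrite (@Tr2 B p p' q q' d (q b)); last exact: qB1.
    by rewrite (@Tr2 B1 p p' q q' dd1 (q b)) //; exists b.
  - rewrite (@Tr2 B2 p p' q q' dd2 (q b)); last by exists b.
    have h1 : ~ (p @` B1) (p b) by move=> H; apply: (disjP p12 H); exists b.
    have h2 : ~ (q @` B1) (p b) by move=> H; exact: (disjP d (pB2 b Bb) (image_subset _ s1 _ H)).
    rewrite qq (@Tr3 B1 p p' q q' (p b) h1 h2).
    by rewrite (@Tr2 B p p' q q' d (q b)) ?qq //; exact: qB2.
have h1 : ~ (p @` B2) x by move=> H; apply: npx; exact: (image_subset _ s2).
have h2 : ~ (q @` B2) x by move=> H; apply: nqx; exact: (image_subset _ s2).
have h3 : ~ (p @` B1) x by move=> H; apply: npx; exact: (image_subset _ s1).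
have h4 : ~ (q @` B1) x by move=> H; apply: nqx; exact: (image_subset _ s1).
by rewrite (@Tr3 B2 p p' q q' x h1 h2) (@Tr3 B1 p p' q q' x h3 h4) (@Tr3 B p p' q q' x npx nqx).
Qed.
Lemma dj_key (B : set CS) (f g : CS -> CS) (D E : set CS) :
  (f = g /\ injective f /\ D `&` E = set0) \/
  (f @` B `&` g @` B = set0 /\ D `<=` B /\ E `<=` B) -> f @` D `&` g @` E = set0.
Proof.
case=> [[<- [fi d]]|[d [sD sE]]]; first exact: inj_disj.
exact: (disj_sub (image_subset _ sD) (image_subset _ sE)).
Qed.

Lemma disjU4 (X Y Z V : set CS) : X `&` Z = set0 -> X `&` V = set0 -> Y `&` Z = set0 ->
  Y `&` V = set0 -> (X `|` Y) `&` (Z `|` V) = set0.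
Proof. by move=> a b c d; rewrite setIUl !setIUr a b c d !setU0. Qed.

Lemma Csplit (G : set (CS -> CS)) : homeo_subgroup G -> vigorous G -> approximately_full G ->
 forall (B : set CS) (p p' q q' r r' : CS -> CS),
 G p -> G q -> G r -> G p' -> G q' -> G r' ->
 cancel p p' -> cancel p' p -> cancel q q' -> cancel q' q -> cancel r r' -> cancel r' r ->
 clopen B -> B !=set0 ->
 p@`B `&` q@`B = set0 -> p@`B `&` r@`B = set0 -> q@`B `&` r@`B = set0 ->
 G (fun x => Tr B p p' q q' (Tr B p p' r r' (Tr B p p' q q' (Tr B p p' r r' x)))).
Proof.
move=> HG HV HAF B p p' q q' r r' Gp Gq Gr Gp' Gq' Gr' pp p'p qq q'q rr r'r
  cB nB dpq dpr dqr.
have HG' := HG; case: HG' => [Gh [Gid [Gcomp Ginv]]].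
have [B1 [B2 [[c1 c2 n1 n2] [d12 U]]]] := @clopen_split B cB nB.
have s1 : B1 `<=` B by rewrite -U; apply: subsetUl.
have s2 : B2 `<=` B by rewrite -U; apply: subsetUr.
have d21 : B2 `&` B1 = set0 by rewrite setIC.
have pi : injective p := can_inj pp.
have qi : injective q := can_inj qq.
have ri : injective r := can_inj rr.
have dqp : q@`B `&` p@`B = set0 by rewrite setIC.
have drp : r@`B `&` p@`B = set0 by rewrite setIC.
have drq : r@`B `&` q@`B = set0 by rewrite setIC.
have EA := @Tr_split B B1 B2 p p' q q' pp qq dpq d12 U.
have EC := @Tr_split B B1 B2 p p' r r' pp rr dpr d12 U.
set A1 := Tr B1 p p' q q'; set A2 := Tr B2 p p' q q'.
set C1 := Tr B1 p p' r r'; set C2 := Tr B2 p p' r r'.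
have dj := @dj_key B.
have dpq1 : p@`B1 `&` q@`B1 = set0 by apply: dj; right.
have dpr1 : p@`B1 `&` r@`B1 = set0 by apply: dj; right.
have dqr1 : q@`B1 `&` r@`B1 = set0 by apply: dj; right.
have dpq2 : p@`B2 `&` q@`B2 = set0 by apply: dj; right.
have dpr2 : p@`B2 `&` r@`B2 = set0 by apply: dj; right.
have dqr2 : q@`B2 `&` r@`B2 = set0 by apply: dj; right.
have fA1 : fixes_out A1 (p@`B1 `|` q@`B1) by exact: (@Tr_fo B1 p p' q q' pp qq dpq1).
have fA2 : fixes_out A2 (p@`B2 `|` q@`B2) by exact: (@Tr_fo B2 p p' q q' pp qq dpq2).
have fC1 : fixes_out C1 (p@`B1 `|` r@`B1) by exact: (@Tr_fo B1 p p' r r' pp rr dpr1).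
have fC2 : fixes_out C2 (p@`B2 `|` r@`B2) by exact: (@Tr_fo B2 p p' r r' pp rr dpr2).
have cA2A1 := @fo_comm _ _ _ _ fA2 fA1 (@disjU4 _ _ _ _ (dj _ _ _ _ (or_introl (conj erefl (conj pi d21))))
   (dj _ _ _ _ (or_intror (conj dpq (conj s2 s1))))
   (dj _ _ _ _ (or_intror (conj dqp (conj s2 s1))))
   (dj _ _ _ _ (or_introl (conj erefl (conj qi d21))))).
have cA2C1 := @fo_comm _ _ _ _ fA2 fC1 (@disjU4 _ _ _ _ (dj _ _ _ _ (or_introl (conj erefl (conj pi d21))))
   (dj _ _ _ _ (or_intror (conj dpr (conj s2 s1))))
   (dj _ _ _ _ (or_intror (conj dqp (conj s2 s1))))
   (dj _ _ _ _ (or_intror (conj dqr (conj s2 s1))))).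
have cC2A1 := @fo_comm _ _ _ _ fC2 fA1 (@disjU4 _ _ _ _ (dj _ _ _ _ (or_introl (conj erefl (conj pi d21))))
   (dj _ _ _ _ (or_intror (conj dpq (conj s2 s1))))
   (dj _ _ _ _ (or_intror (conj drp (conj s2 s1))))
   (dj _ _ _ _ (or_intror (conj drq (conj s2 s1))))).
have cC2C1 := @fo_comm _ _ _ _ fC2 fC1 (@disjU4 _ _ _ _ (dj _ _ _ _ (or_introl (conj erefl (conj pi d21))))
   (dj _ _ _ _ (or_intror (conj dpr (conj s2 s1))))
   (dj _ _ _ _ (or_intror (conj drp (conj s2 s1))))
   (dj _ _ _ _ (or_introl (conj erefl (conj ri d21))))).
have -> : (fun x => Tr B p p' q q' (Tr B p p' r r' (Tr B p p' q q' (Tr B p p' r r' x))))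
   = (fun x => A1 (C1 (A1 (C1 x)))) \o (fun x => A2 (C2 (A2 (C2 x)))).
  apply/funext => x /=; rewrite !EA !EC -/A1 -/A2 -/C1 -/C2.
  by do 6! rewrite ?cA2A1 ?cA2C1 ?cC2A1 ?cC2C1.
have [b1 Bb1] := n1; have [b2 Bb2] := n2.
have hp := Gh p Gp; have hq := Gh q Gq.
have F1 : G (fun x => A1 (C1 (A1 (C1 x)))).
  apply: (@Cprime G HG HV HAF B1 p p' q q' r r' (p@`B2) (q@`B2)) => //.
  - exact: homeo_clopen.
  - by exists (p b2); exists b2.
  - exact: homeo_clopen.
  - by exists (q b2); exists b2.
  - by apply: dj; left.
  - by apply: dj; right.
  - by apply: dj; right.
  - by apply: dj; right.
  - by apply: dj; left.
  - by apply: dj; right.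
have F2 : G (fun x => A2 (C2 (A2 (C2 x)))).
  apply: (@Cprime G HG HV HAF B2 p p' q q' r r' (p@`B1) (q@`B1)) => //.
  - exact: homeo_clopen.
  - by exists (p b1); exists b1.
  - exact: homeo_clopen.
  - by exists (q b1); exists b1.
  - by apply: dj; left.
  - by apply: dj; right.
  - by apply: dj; right.
  - by apply: dj; right.
  - by apply: dj; left.
  - by apply: dj; right.
exact: (Gcomp _ _ F2 F1).
Qed.
Lemma tpermE (I : finType) (x y z : I) :
  tperm x y z = if z == x then y else if z == y then x else z.
Proof. by case: tpermP => [->|->|/eqP/negbTE -> /eqP/negbTE ->]; rewrite ?eqxx //; case: eqP. Qed.

Lemma p3 (I : finType) (a b c : I) : a != b -> a != c -> b != c ->
  (tperm a b * tperm a c = tperm a c * tperm a b * tperm a c * tperm a b)%g.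
Proof.
move=> ab ac bc; have ba : b != a by rewrite eq_sym.
have ca : c != a by rewrite eq_sym. have cb : c != b by rewrite eq_sym.
apply/permP => x; rewrite !permM.
have [->|xa] := eqVneq x a; last have [->|xb] := eqVneq x b; last have [->|xc] := eqVneq x c;
 by rewrite !tpermE ?eqxx ?(negbTE ab, negbTE ba, negbTE ac, negbTE ca, negbTE bc, negbTE cb)
   ?(negbTE xa, negbTE xb, negbTE xc) /= ?eqxx ?(negbTE ab, negbTE ba, negbTE ac, negbTE ca, negbTE bc, negbTE cb) /= ?eqxx ?(negbTE ab, negbTE ba, negbTE ac, negbTE ca, negbTE bc, negbTE cb)
   ?(negbTE xa, negbTE xb, negbTE xc) /= ?eqxx ?(negbTE ab, negbTE ba, negbTE ac, negbTE ca, negbTE bc, negbTE cb) ?(negbTE xa, negbTE xb, negbTE xc).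
Qed.

Definition Dl (I : finType) (B : set CS) (g gi : I -> CS -> CS) (s : {perm I}) (x : CS) : CS :=
  if [pick i | `[< (g i @` B) x >] ] is Some i then g (s i) (gi i x) else x.
Arguments Dl {I}.

Section DlSec.
Variables (I : finType) (B : set CS) (g gi : I -> CS -> CS).
Hypotheses (gK : forall i, cancel (g i) (gi i))
  (dis : forall i j, i != j -> g i @` B `&` g j @` B = set0).

Lemma Dl_in s i x : (g i @` B) x -> Dl B g gi s x = g (s i) (gi i x).
Proof.
move=> Hx; rewrite /Dl; case: pickP => [j /asboolP Hj | H].
  have [->//|ij] := eqVneq i j; exfalso; exact: (disjP (dis _ _ ij) Hx Hj).
by have := H i; rewrite (asboolT Hx).
Qed.

Lemma Dl_out s x : (forall i, ~ (g i @` B) x) -> Dl B g gi s x = x.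
Proof.
move=> Hx; rewrite /Dl; case: pickP => [j /asboolP Hj | //].
by exfalso; exact: (Hx j Hj).
Qed.

Lemma DlM s t x : Dl B g gi (s * t)%g x = Dl B g gi t (Dl B g gi s x).
Proof.
have [[i [b Bb <-]]|H] := pselect (exists i, (g i @` B) x).
  rewrite (@Dl_in (s * t)%g i); last by exists b.
  rewrite (@Dl_in s i); last by exists b.
  by rewrite !gK permM (@Dl_in t (s i)) ?gK //; exists b.
by rewrite !Dl_out // => i Hi; apply: H; exists i.
Qed.

Lemma Dl1 x : Dl B g gi 1%g x = x.
Proof.
have [[i Hi]|H] := pselect (exists i, (g i @` B) x).
  by rewrite (@Dl_in _ i) // perm1; case: Hi => b Bb <-; rewrite gK.
by rewrite !Dl_out // => i Hi; apply: H; exists i.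
Qed.

Lemma Dl_tperm a b x : a != b ->
  Dl B g gi (tperm a b) x = Tr B (g a) (gi a) (g b) (gi b) x.
Proof.
move=> ab.
have [[i [y By <-]]|H] := pselect (exists i, (g i @` B) x).
  rewrite (@Dl_in _ i); last by exists y.
  have [ea|ia] := eqVneq i a.
    rewrite ea tpermL (@Tr1 B (g a) (gi a) (g b) (gi b) (g a y)) ?gK //; by exists y.
  have [eb|ib] := eqVneq i b.
    rewrite eb tpermR (@Tr2 B (g a) (gi a) (g b) (gi b) (dis _ _ ab) (g b y)) ?gK //; by exists y.
  rewrite tpermD 1?eq_sym // gK (@Tr3 B (g a) (gi a) (g b) (gi b) (g i y)) //.
  - by move=> Ha; apply: (disjP (dis _ _ ia) _ Ha); exists y.
  - by move=> Hb; apply: (disjP (dis _ _ ib) _ Hb); exists y.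
rewrite Dl_out; last by move=> i Hi; apply: H; exists i.
by rewrite Tr3 // => Hi; apply: H; eexists; exact: Hi.
Qed.
End DlSec.
Lemma Even (G : set (CS -> CS)) : homeo_subgroup G -> vigorous G -> approximately_full G ->
 forall (I : finType) (B : set CS) (g gi : I -> CS -> CS),
 (forall i, G (g i)) -> (forall i, G (gi i)) ->
 (forall i, cancel (g i) (gi i)) -> (forall i, cancel (gi i) (g i)) ->
 clopen B -> B !=set0 -> (forall i j, i != j -> g i @` B `&` g j @` B = set0) ->
 forall s, ~~ odd_perm s -> G (Dl B g gi s).
Proof.
move=> HG HV HAF I B g gi Gg Ggi gK giK cB nB dis.
have HG' := HG; case: HG' => [Gh [Gid [Gcomp Ginv]]].
pose P s := G (Dl B g gi s).
have PM s t : P s -> P t -> P (s * t)%g.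
  move=> Ps Pt; rewrite /P.
  have -> : Dl B g gi (s * t)%g = Dl B g gi t \o Dl B g gi s.
    by apply/funext => x; rewrite /= (@DlM I B g gi gK dis).
  exact: Gcomp.
have P1 : P 1%g by rewrite /P; have -> : Dl B g gi 1%g = id by apply/funext => x; rewrite (@Dl1 I B g gi gK dis).
have P3 a b c : a != b -> a != c -> b != c -> P (tperm a b * tperm a c)%g.
  move=> ab ac bc; rewrite /P p3 //.
  have -> : Dl B g gi (tperm a c * tperm a b * tperm a c * tperm a b)%g =
     (fun x => Tr B (g a) (gi a) (g b) (gi b) (Tr B (g a) (gi a) (g c) (gi c)
        (Tr B (g a) (gi a) (g b) (gi b) (Tr B (g a) (gi a) (g c) (gi c) x)))).
    by apply/funext => x; rewrite !(@DlM I B g gi gK dis) !(@Dl_tperm I B g gi gK dis a b _ ab) !(@Dl_tperm I B g gi gK dis a c _ ac).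
  apply: (@Csplit G HG HV HAF) => //; exact: dis.
have Ppair a b c d : a != b -> c != d -> P (tperm a b * tperm c d)%g.
  move=> ab cd.
  have [ca|ca] := eqVneq c a.
    rewrite ca; have [db|db] := eqVneq d b; first by rewrite db tperm2.
    by apply: P3 => //; [rewrite -ca | rewrite eq_sym].
  have [cb|cb] := eqVneq c b.
    rewrite cb (tpermC a b); have [da|da] := eqVneq d a; first by rewrite da tperm2.
    by apply: P3 => //; [rewrite eq_sym | rewrite -cb | rewrite eq_sym].
  have [da|da] := eqVneq d a.
    rewrite da (tpermC c a); apply: P3 => //; rewrite eq_sym //.
  have [db|db] := eqVneq d b.
    rewrite db (tpermC c b) (tpermC a b); apply: P3 => //; rewrite eq_sym //.
  have -> : (tperm a b * tperm c d = (tperm b a * tperm b c) * (tperm c b * tperm c d))%g.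
    by rewrite (tpermC b a) (tpermC c b) -mulgA (mulgA (tperm b c)) tperm2 mul1g.
  apply: PM; apply: P3; rewrite // eq_sym //.
have key : forall ts : seq (I * I), all perm.dpair ts ->
   (~~ odd (size ts) -> P (\prod_(t <- ts) tperm t.1 t.2)%g) /\
   (odd (size ts) -> forall a b, a != b -> P (tperm a b * \prod_(t <- ts) tperm t.1 t.2)%g).
  elim => [|[a b] ts IH] /=.
    by split => //; rewrite big_nil.
  move=> /andP [dab dts]; have [IH1 IH2] := IH dts; rewrite big_cons /=; split.
  - by rewrite negbK => od; apply: IH2.
  - move=> od c d cd; rewrite mulgA; apply: PM; first exact: Ppair.
    by apply: IH1.
move=> s; case: (prod_tpermP s) => ts -> dts.
rewrite odd_perm_prod // => ev.
exact: (proj1 (key ts dts) ev).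
Qed.
Section Lift.
Variable (I : finType).
Definition Lf (s : {perm I}) (ib : I * bool) : I * bool := (s ib.1, ib.2).
Lemma Lf_inj s : injective (Lf s).
Proof. by move=> [i b] [j c] [/perm_inj -> ->]. Qed.
Definition L (s : {perm I}) : {perm I * bool} := perm (Lf_inj s).

Lemma L_mul s t : L (s * t)%g = (L s * L t)%g.
Proof. by apply/permP => [[i b]]; rewrite permM !permE /Lf /= permM. Qed.

Lemma L_tperm a b : L (tperm a b) = (tperm (a, false) (b, false) * tperm (a, true) (b, true))%g.
Proof.
apply/permP => [[i c]]; rewrite permM permE /Lf /= !tpermE !xpair_eqE.
have [eia|ia] := eqVneq i a.
  subst i; by case: c; do 4! rewrite /= ?xpair_eqE ?eqxx ?andbT ?andbF.
have [eib|ib] := eqVneq i b.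
  subst i; have ba : (b == a) = false by apply/negbTE.
  by case: c; do 4! rewrite /= ?ba ?xpair_eqE ?eqxx ?andbT ?andbF.
by case: c; do 4! rewrite /= ?(negbTE ia) ?(negbTE ib) ?xpair_eqE ?eqxx ?andbT ?andbF.
Qed.

Lemma L_even s : ~~ odd_perm (L s).
Proof.
case: (prod_tpermP s) => ts -> dts.
elim: ts dts => [|[a b] ts IH] /=.
  rewrite big_nil; have -> : L 1%g = 1%g by apply/permP => x; rewrite permE perm1 /Lf perm1; case: x.
  by rewrite odd_perm1.
move=> /andP [ab dts]; rewrite big_cons L_mul odd_permM L_tperm odd_permM !odd_tperm /=.
by rewrite !xpair_eqE /= !andbT ab /= IH.
Qed.
End Lift.
Arguments L {I} s.
Arguments Lf {I} s ib.
Lemma img_comp (f g : CS -> CS) (A : set CS) : (f \o g) @` A = f @` (g @` A).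
Proof.
apply/seteqP; split => y.
- by case=> x Ax <-; exists (g x) => //; exists x.
- by case=> _ [x Ax <-] <-; exists x.
Qed.

Theorem lemma3p5 (G : set (CS -> CS)) (C : set CS) (n : nat)
  (gam : 'I_n -> (CS -> CS)) (s : 'S_n) (delta : CS -> CS) :
  homeo_subgroup G -> vigorous G -> approximately_full G ->
  KC C ->
  injective gam -> (forall i, G (gam i)) ->
  (forall i j, gam i @` C `&` gam j @` C !=set0 -> gam i = gam j) ->
  homeo delta ->
  supp delta `<=` \bigcup_i (gam i @` C) ->
  (forall i x, C x -> delta (gam i x) = gam (s i) x) ->
  orbit_even G (orbitG G C) \/ ~~ odd_perm s ->
  G delta.
Proof.
move=> HG HV HAF [cC [nC _]] gi_inj Ggam dgam hdelta sdelta edelta Hcase.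
have HG' := HG; case: HG' => [Gh [Gid [Gcomp Ginv]]].
have giex : forall i, {h | G h /\ cancel (gam i) h /\ cancel h (gam i)}.
  move=> i; apply: cid; have [h Gh' [c1 c2]] := Ginv _ (Ggam i); by exists h.
pose gi i := proj1_sig (giex i).
have Ggi i : G (gi i) by rewrite /gi; case: (giex i) => h [].
have gK i : cancel (gam i) (gi i) by rewrite /gi; case: (giex i) => h [? []].
have giK i : cancel (gi i) (gam i) by rewrite /gi; case: (giex i) => h [? []].
have dis i j : i != j -> gam i @` C `&` gam j @` C = set0.
  move=> ij; apply/seteqP; split => x // Hx; exfalso.
  by move/eqP: ij; apply; apply: gi_inj; apply: dgam; exists x.
have fixout x : (forall i, ~ (gam i @` C) x) -> delta x = x.
  move=> H; apply: contrapT => ne.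
  have [i _ Hi] : (\bigcup_i (gam i @` C)) x by apply: sdelta.
  exact: (H i Hi).
case: Hcase => [Hev|Hs]; last first.
  have -> : delta = Dl C gam gi s.
    apply/funext => x.
    have [[i [c Cc <-]]|H] := pselect (exists i, (gam i @` C) x).
      by rewrite (@Dl_in _ C gam gi dis s i) ?gK ?edelta //; exists c.
    rewrite (@Dl_out _ C gam gi s x) ?fixout // => i Hi; apply: H; by exists i.
  exact: (@Even G HG HV HAF _ C gam gi Ggam Ggi gK giK cC nC dis s Hs).
case: Hev => B [cB [nB _]] [U [V [mu [nu [[_ _ Gmu Gnu] [eU eV dUV _ eC]]]]]].
have [a Ga aB] : (orbitG G B) U by rewrite eU; exists id => //; apply: img_id.
have [b Gb bB] : (orbitG G B) V by rewrite eV; exists id => //; apply: img_id.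
have [k Gk kC] : (orbitG G (mu @` U `|` nu @` V)) C by rewrite -eC; exists id => //; apply: img_id.
pose p1 := k \o mu \o a; pose p2 := k \o nu \o b.
have Gp1 : G p1 by exact: (Gcomp _ _ Ga (Gcomp _ _ Gmu Gk)).
have Gp2 : G p2 by exact: (Gcomp _ _ Gb (Gcomp _ _ Gnu Gk)).
have [p1' Gp1' [p11 p11']] := Ginv _ Gp1.
have [p2' Gp2' [p22 p22']] := Ginv _ Gp2.
have [k' _ [kk _]] := Ginv _ Gk.
have p1B : p1 @` B = k @` (mu @` U) by rewrite /p1 (img_comp (k \o mu) a) (img_comp k mu) aB.
have p2B : p2 @` B = k @` (nu @` V) by rewrite /p2 (img_comp (k \o nu) b) (img_comp k nu) bB.
have Ceq : C = p1 @` B `|` p2 @` B by rewrite p1B p2B -image_setU kC.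
have d12 : p1 @` B `&` p2 @` B = set0 by rewrite p1B p2B; apply: inj_disj => //; exact: can_inj kk.
pose P (c : bool) := if c then p2 else p1.
pose P' (c : bool) := if c then p2' else p1'.
pose g' (ib : 'I_n * bool) := gam ib.1 \o P ib.2.
pose gi' (ib : 'I_n * bool) := P' ib.2 \o gi ib.1.
have PK c : cancel (P c) (P' c) by case: c.
have P'K c : cancel (P' c) (P c) by case: c.
have PC c : P c @` B `<=` C by rewrite Ceq; case: c; [apply: subsetUr|apply: subsetUl].
have g'B i c : g' (i, c) @` B `<=` gam i @` C.
  by rewrite /g' (img_comp (gam i) (P c)); apply: image_subset.
have dis' : forall ib jc : 'I_n * bool, ib != jc -> g' ib @` B `&` g' jc @` B = set0.
  move=> [i c] [j d] /=; have [<-|ij] := eqVneq i j.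
    rewrite xpair_eqE eqxx /= => cd; rewrite /g' /= (img_comp (gam i) (P c)) (img_comp (gam i) (P d)); apply: inj_disj; first exact: can_inj (gK i).
    by move: cd; case: c; case: d => //= _; rewrite // setIC.
  move=> _; exact: (disj_sub (g'B i c) (g'B j d) (dis i j ij)).
have -> : delta = Dl B g' gi' (L s).
  apply/funext => x.
  have [[i [y Cy <-]]|H] := pselect (exists i, (gam i @` C) x).
    move: Cy; rewrite Ceq => -[] [z Bz <-].
    - rewrite (@Dl_in _ B g' gi' dis' (L s) (i, false)); last by exists z.
      by rewrite permE /Lf /= /gi' /g' /= gK p11 edelta // Ceq; left; exists z.
    - rewrite (@Dl_in _ B g' gi' dis' (L s) (i, true)); last by exists z.
      by rewrite permE /Lf /= /gi' /g' /= gK p22 edelta // Ceq; right; exists z.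
  have H' : forall i, ~ (gam i @` C) x by move=> i Hi; apply: H; exists i.
  rewrite (@Dl_out _ B g' gi' (L s) x) ?fixout //.
  move=> [i c] Hi; apply: (H' i); exact: (g'B i c).
apply: (@Even G HG HV HAF _ B g' gi') => //.
- by move=> [i c]; apply: (Gcomp _ _ _ (Ggam i)); case: c.
- by move=> [i c]; apply: (Gcomp _ _ (Ggi i)); case: c.
- by move=> [i c] x; rewrite /g' /gi' /= gK PK.
- by move=> [i c] x; rewrite /g' /gi' /= P'K giK.
- exact: L_even.
Qed.
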